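(* Let $K$ and $L$ be regular languages over an alphabet $\Sigma$. If for every $r\ge 1$ there is a tower of prefixes of height at least $r$ between $K$ and $L$, then there is an infinite tower of prefixes between $K$ and $L$.
   Context: A string $v$ is a prefix of $w$, written $v\le w$, if $w=vu$ for some string $u$. A sequence $(w_i)_{i=1}^r$ of strings is a tower of prefixes between languages $K$ and $L$ if $w_1\in K\cup L$ and for all $i=1,\dots,r-1$: $w_i\le w_{i+1}$, $w_i\in K$ implies $w_{i+1}\in L$, and $w_i\in L$ implies $w_{i+1}\in K$; $r$ is its height. An infinite tower of prefixes is an infinite sequence $(w_i)_{i\ge1}$ with the same properties. *)

(* Defs.v *)
From mathcomp Require Import all_boot.
Set Implicit Arguments. Unset Strict Implicit. Unset Printing Implicit Defensive.

Definition word (Sigma : finType) := seq Sigma.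
Definition language (Sigma : finType) := word Sigma -> Prop.

Record dfa (Sigma : finType) := DFA {
  dfa_state : finType;
  dfa_init : dfa_state;
  dfa_trans : dfa_state -> Sigma -> dfa_state;
  dfa_final : pred dfa_state }.

Definition dfa_accepts (Sigma : finType) (A : dfa Sigma) (w : word Sigma) : bool :=
  @dfa_final Sigma A (foldl (@dfa_trans Sigma A) (@dfa_init Sigma A) w).

Definition regular (Sigma : finType) (K : language Sigma) : Prop :=
  exists A : dfa Sigma, forall w, K w <-> dfa_accepts A w.

Definition tower_step (Sigma : finType) (K L : language Sigma) (u v : word Sigma) : Prop :=
  prefix u v /\ (K u -> L v) /\ (L u -> K v).

(* (w 0, ..., w (r-1)) is a tower of prefixes of height r between K and L
   (indices shifted by one w.r.t. the paper: w_i = w (i-1)). *)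
Definition tower (Sigma : finType) (K L : language Sigma) (w : nat -> word Sigma) (r : nat) : Prop :=
  1 <= r /\ (K (w 0) \/ L (w 0)) /\
  forall i, i.+1 < r -> tower_step K L (w i) (w i.+1).

Definition infinite_tower (Sigma : finType) (K L : language Sigma) (w : nat -> word Sigma) : Prop :=
  (K (w 0) \/ L (w 0)) /\ forall i, tower_step K L (w i) (w i.+1).

(* Main.v *)
Require Import Defs.
From mathcomp Require Import all_boot.
From mathcomp Require Import zify.

Lemma prefix_cat (T : eqType) (s a b : seq T) : prefix (s ++ a) (s ++ b) = prefix a b.
Proof. by rewrite prefix_catr // eqxx. Qed.

Section Pump.
Variables (Sigma : finType) (K L : language Sigma) (S : Type) (st : word Sigma -> S).
Hypothesis compat : forall u u' z, st u = st u' -> st (u ++ z) = st (u' ++ z).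
Hypothesis compK : forall u u', st u = st u' -> (K u <-> K u').
Hypothesis compL : forall u u', st u = st u' -> (L u <-> L u').
Variables (v : nat -> word Sigma) (p : nat).
Hypothesis p0 : 0 < p.
Hypothesis v0KL : K (v 0) \/ L (v 0).
Hypothesis vstep : forall k, k < p -> tower_step K L (v k) (v k.+1).
Hypothesis vst : st (v p) = st (v 0).

Lemma vpre k : k <= p -> prefix (v 0) (v k).
Proof.
elim: k => [|k IH] hk; first exact: prefix_refl.
exact: (@prefix_trans _ (v k) _ _ (IH (ltnW hk)) (proj1 (vstep _ hk))).
Qed.

Definition y k := drop (size (v 0)) (v k).
Lemma vy k : k <= p -> v k = v 0 ++ y k.
Proof. by move=> /vpre; rewrite prefixE => /eqP H; rewrite /y -{1}H cat_take_drop. Qed.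

Definition x := y p.
Definition xpow q := iter q (fun s => s ++ x) [::].

Lemma st_pow q z : st (v 0 ++ xpow q ++ z) = st (v 0 ++ z).
Proof.
elim: q z => [|q IH] z //=.
have H : st ((v 0 ++ xpow q) ++ x) = st (v 0) by rewrite -catA IH /x -vy // vst.
rewrite -catA catA catA; exact: compat H.
Qed.

Definition W q m := v 0 ++ xpow q ++ y m.

Lemma Wst q m : m <= p -> st (W q m) = st (v m).
Proof. by move=> hm; rewrite /W st_pow -vy. Qed.

Lemma y0 : y 0 = [::].
Proof. by rewrite /y drop_size. Qed.

Lemma Wstep q m : m < p ->
  tower_step K L (W q m) (if m.+1 < p then W q m.+1 else W q.+1 0).
Proof.
move=> hm; have [prf [hK hL]] := vstep _ hm.
have pre_y : prefix (y m) (y m.+1).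
  by move: prf; rewrite (vy _ (ltnW hm)) (vy _ hm) prefix_cat.
have sm : st (W q m) = st (v m) by apply: Wst; exact: ltnW.
case: ifP => hlt.
- have sm1 : st (W q m.+1) = st (v m.+1) by apply: Wst; exact: ltnW.
  split; first by rewrite /W !prefix_cat.
  split=> H.
  + by apply/(compL _ _ sm1)/hK/(compK _ _ sm).
  + by apply/(compK _ _ sm1)/hL/(compL _ _ sm).
- have ep : m.+1 = p by apply/eqP; rewrite eqn_leq hm leqNgt hlt.
  have s0 : st (W q.+1 0) = st (v m.+1) by rewrite (Wst q.+1 0 (leq0n _)) ep vst.
  split.
    rewrite /W y0 cats0 /= !prefix_cat.
    by move: pre_y; rewrite ep.
  split=> H.
  + by apply/(compL _ _ s0)/hK/(compK _ _ sm).
  + by apply/(compK _ _ s0)/hL/(compL _ _ sm).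
Qed.

Definition Wn n := W (n %/ p) (n %% p).

Lemma pump : exists w, infinite_tower K L w.
Proof.
exists Wn; split.
  have s : st (Wn 0) = st (v 0) by rewrite /Wn div0n mod0n Wst.
  by case: v0KL => H; [left; apply/(compK _ _ s) | right; apply/(compL _ _ s)].
move=> n; rewrite /Wn.
have hm : n %% p < p by rewrite ltn_mod.
have := Wstep (n %/ p) _ hm.
have -> : n.+1 = (if (n %% p).+1 < p then (n %/ p) * p + (n %% p).+1
                  else (n %/ p).+1 * p + 0).
  have E := divn_eq n p.
  case: ifP => h0; set q := n %/ p in E *; set r := n %% p in E hm h0 *; lia.
case: ifP => h.
  by rewrite divnMDl // modnMDl (divn_small h) addn0 (modn_small h).
by rewrite divnMDl // modnMDl div0n addn0 mod0n.
Qed.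
End Pump.

Lemma tower_KL (Sigma : finType) (K L : language Sigma) w h :
  tower K L w h -> forall k, k < h -> K (w k) \/ L (w k).
Proof.
move=> [_ [H0 Hs]]; elim=> [|k IH] hk //.
have [_ [hK hL]] := Hs k hk.
by case: (IH (ltnW hk)) => H; [right; apply: hK | left; apply: hL].
Qed.

Theorem lemma13 (Sigma : finType) (K L : language Sigma) :
  regular K -> regular L ->
  (forall r, 1 <= r -> exists (h : nat) (w : nat -> word Sigma), r <= h /\ tower K L w h) ->
  exists w : nat -> word Sigma, infinite_tower K L w.
Proof.
move=> [A hA] [B hB] Hr.
pose S : finType := (dfa_state A * dfa_state B)%type.
pose st (u : word Sigma) : S :=
  (foldl (@dfa_trans _ A) (@dfa_init _ A) u, foldl (@dfa_trans _ B) (@dfa_init _ B) u).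
have compat : forall u u' z, st u = st u' -> st (u ++ z) = st (u' ++ z).
  by move=> u u' z [e1 e2]; rewrite /st !foldl_cat e1 e2.
have compK : forall u u', st u = st u' -> (K u <-> K u').
  move=> u u' [e1 _]; rewrite !hA /dfa_accepts e1; done.
have compL : forall u u', st u = st u' -> (L u <-> L u').
  move=> u u' [_ e2]; rewrite !hB /dfa_accepts e2; done.
have [h [w [hh tw]]] := Hr #|S|.+1 isT.
have KL := @tower_KL _ _ _ _ _ tw.
have main : forall i j, i < j -> j < h -> st (w i) = st (w j) ->
    exists w, infinite_tower K L w.
  move=> i j hij hj e.
  have [_ [_ Hs]] := tw.
  apply: (@pump Sigma K L S st compat compK compL (fun k => w (i + k)) (j - i)).
  - by rewrite subn_gt0.
  - by rewrite addn0; apply: KL; exact: ltn_trans hij hj.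
  - move=> k hk; rewrite addnS; apply: Hs.
    rewrite -addnS; apply: leq_ltn_trans hj; rewrite -(subnKC (ltnW hij)) leq_add2l.
    exact: hk.
  - by rewrite addn0 subnKC ?e // ltnW.
pose f (k : 'I_h) := st (w k).
have : ~~ injectiveb f.
  apply/negP => /injectiveP inj.
  have := leq_card _ inj; rewrite card_ord => hle.
  by move: (leq_trans hh hle); rewrite ltnn.
move=> /injectivePn [a [b nab fab]].
case: (ltngtP a b) => hab.
- exact: (main a b hab (ltn_ord b) fab).
- exact: (main b a hab (ltn_ord a) (esym fab)).
- by move: nab; rewrite (val_inj hab) eqxx.
Qed.
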